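(* Let $X$ be a finite-dimensional real Banach space and let $A \subset X$ be a bounded set with $d(0, A) > 0$. Let $I$ be an index set with $m$ elements and $\{x_i : i \in I\} \subset S_X$, and assume $\overline{A} \cap \bigcup_{i \in I} x_i^{\perp} = \emptyset$. If $\{B(y_i, r_i)\}_{i \in I}$ covers $A$ for some $y_i \in \mathbb{R}^+ x_i$ and $r_i > 0$ with $\|y_i\| \ge r_i$ for all $i \in I$, then for every selection $\phi$ of the subdifferential mapping $\partial\|\cdot\|$, $\sup_{i \in I} \phi(x_i)(x) > 0$ for every $x \in \overline{A}$.
   Context: $d(0,A)=\inf\{\|a\|:a\in A\}$; $\overline{A}$ is the closure. $x_i^{\perp} = \{ y \in X : \|x_i + \mu y\| \ge \|x_i\| \text{ for all } \mu \in \mathbb{R}\}$ (Birkhoff–James orthogonality). $\mathbb{R}^+ x_i = \{ t x_i : t > 0\}$; $B(c,r) = \{ z : \|c - z\| < r\}$. $\partial\|x\| = \{ x^* \in S_{X^*} : x^*(x) = \|x\|\}$ for $x \neq 0$; a selection of $\partial\|\cdot\|$ is a map $\phi$ with $\phi(x) \in \partial\|x\|$ for each non-zero $x$. *)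

(* Defs.v *)
From HB Require Import structures.
From mathcomp Require Import all_boot all_order all_algebra.
From mathcomp Require Import all_classical all_reals all_analysis.
Set Implicit Arguments. Unset Strict Implicit. Unset Printing Implicit Defensive.
Import Order.TTheory GRing.Theory Num.Theory.
Import numFieldNormedType.Exports.
Local Open Scope classical_set_scope.
Local Open Scope ring_scope.

Section Defs.
Context {R : realType} {X : normedModType R}.

Definition finite_dim : Prop :=
  exists (n : nat) (b : 'I_n -> X), forall x : X,
    exists c : 'I_n -> R, x = \sum_(i < n) c i *: b i.

Definition lin_functional (f : X -> R) : Prop :=
  forall (a : R) (u v : X), f (a *: u + v) = a * f u + f v.

Definition in_dual_sphere (f : X -> R) : Prop :=
  lin_functional f /\
  (forall y : X, `|y| <= 1 -> `|f y| <= 1) /\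
  (forall e : R, 0 < e -> exists y : X, `|y| <= 1 /\ 1 - e < `|f y|).

Definition subdiff_norm (x : X) : set (X -> R) :=
  [set f | in_dual_sphere f /\ f x = `|x|].

Definition subdiff_selection (phi : X -> (X -> R)) : Prop :=
  forall x : X, x != 0 -> subdiff_norm x (phi x).

(* Birkhoff-James orthogonal complement x^perp *)
Definition bj_perp (x : X) : set X :=
  [set y | forall mu : R, `|x| <= `|x + mu *: y|].

Definition open_ball (c : X) (r : R) : set X := [set z | `|c - z| < r].

Definition dist0_pos (A : set X) : Prop :=
  exists d : R, 0 < d /\ forall a, A a -> d <= `|a|.

Definition norm_bounded (A : set X) : Prop :=
  exists M : R, forall a, A a -> `|a| <= M.

End Defs.

(* Main.v *)
Require Import Defs.
From HB Require Import structures.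
From mathcomp Require Import all_boot all_order all_algebra.
From mathcomp Require Import all_classical all_reals all_analysis.
From mathcomp Require Import lra.
Import Order.TTheory GRing.Theory Num.Theory.
Import numFieldNormedType.Exports.
Local Open Scope classical_set_scope.
Local Open Scope ring_scope.

Section Aux.
Context {R : realType} {X : normedModType R}.

Lemma lf0 (f : X -> R) : lin_functional f -> f 0 = 0.
Proof.
move=> lf; have := lf 1 0 0; rewrite scaler0 addr0 mul1r.
by move/(congr1 (fun t => t - f 0)); rewrite subrr addrK => <-.
Qed.

Lemma lfZ (f : X -> R) a u : lin_functional f -> f (a *: u) = a * f u.
Proof. by move=> lf; have := lf a u 0; rewrite addr0 (lf0 _ lf) addr0. Qed.

Lemma lfB (f : X -> R) u v : lin_functional f -> f (u - v) = f u - f v.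
Proof.
move=> lf; have := lf (-1) v u; rewrite scaleN1r addrC => ->.
by rewrite mulN1r addrC.
Qed.

Lemma lfD (f : X -> R) u v : lin_functional f -> f (u + v) = f u + f v.
Proof. by move=> lf; have := lf 1 u v; rewrite scale1r mul1r. Qed.

Lemma fbound (f : X -> R) v : in_dual_sphere f -> `|f v| <= `|v|.
Proof.
move=> [lf [hb _]].
have [->|v0] := eqVneq v 0; first by rewrite (lf0 _ lf) !normr0.
have nv : 0 < `|v| by rewrite normr_gt0.
have := hb (`|v|^-1 *: v).
rewrite normrZ normfV normr_id mulVf ?gt_eqF // lexx => /(_ isT).
rewrite (lfZ _ _ _ lf) normrM normfV normr_id ler_pdivrMl // mulr1 //.
Qed.
End Aux.

Theorem mainTheorem9 (R : realType) (X : completeNormedModType R)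
  (A : set X) (m : nat) (x : 'I_m -> X) (y : 'I_m -> X) (r : 'I_m -> R) :
  finite_dim (X := X) ->
  norm_bounded A ->
  dist0_pos A ->
  (forall i, `|x i| = 1) ->
  closure A `&` (\bigcup_(i in [set: 'I_m]) bj_perp (x i)) = set0 ->
  (forall i, exists t : R, 0 < t /\ y i = t *: x i) ->
  (forall i, 0 < r i) ->
  (forall i, r i <= `|y i|) ->
  A `<=` \bigcup_(i in [set: 'I_m]) open_ball (y i) (r i) ->
  forall phi : X -> (X -> R), subdiff_selection phi ->
  forall z : X, closure A z -> exists i : 'I_m, 0 < phi (x i) z.
Proof.
move=> _ _ _ nx hperp hy hr hry hcov phi hphi z zA.
apply/not_existsP => H.
have key : forall i, r i < `|y i - z|.
  move=> i.
  have xi0 : x i != 0 by rewrite -normr_eq0 nx oner_neq0.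
  have [hds fx] := hphi _ xi0; have [lf _] := hds.
  rewrite nx in fx.
  have [t [t0 yi]] := hy i; rewrite yi.
  have fz0 : phi (x i) z != 0.
    apply/eqP => fz.
    have : (closure A `&` (\bigcup_(i in [set: 'I_m]) bj_perp (x i))) z.
      split => //; exists i => //= mu.
      rewrite nx.
      have := fbound _ (x i + mu *: z) hds.
      by rewrite (lfD _ _ _ lf) (lfZ _ _ _ lf) fz mulr0 addr0 fx normr1.
    by rewrite hperp.
  have fzn : phi (x i) z < 0.
    by rewrite lt_neqAle fz0 /=; rewrite leNgt; apply/negP => h; apply: (H i).
  have hb := fbound _ (t *: x i - z) hds.
  rewrite (lfB _ _ _ lf) (lfZ _ _ _ lf) fx mulr1 in hb.
  have := hry i; rewrite yi normrZ nx mulr1 gtr0_norm // => hrt.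
  have := ler_norm (t - phi (x i) z).
  move: hb fzn hrt; set a := phi (x i) z; set b := `|_ - z|.
  move=> hb fzn hrt h; apply: (le_lt_trans hrt).
  apply: (lt_le_trans _ (le_trans h hb)).
  by rewrite -subr_gt0 addrAC subrr add0r oppr_gt0.
have nb : \forall w \near z, forall i, r i < `|y i - w|.
  apply: filter_forall => i.
  have e0 : 0 < `|y i - z| - r i by rewrite subr_gt0.
  move: (nbhsx_ballx z _ e0); apply: filterS => w.
  rewrite -ball_normE /= => hzw.
  have : `|y i - z| <= `|y i - w| + `|z - w|.
    have -> : y i - z = (y i - w) + (w - z) by rewrite addrA subrK.
    by rewrite (distrC z w); apply: ler_normD.
  move: hzw; set p := `|y i - z|; set q := `|z - w|; set s := `|y i - w|.
  move=> h1 h2; lra.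
have [a [Aa Pa]] := zA _ nb.
have [i _ hi] := hcov a Aa.
by move: (Pa i); rewrite /open_ball /= in hi; rewrite ltNge ltW.
Qed.
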